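(* Let $\mathcal{A}=\{H_{e_i}:\boldsymbol\alpha_{e_i}\cdot\mathbf{x}=0\mid 1\le i\le m\}$ be a linear multi-arrangement in $\mathbb{R}^n$ (each $\boldsymbol\alpha_{e_i}\ne 0$), totally ordered by $H_{e_1}\prec\cdots\prec H_{e_m}$, and let $\mathscr{B}_k$ and $\phi_k$ be as in the context. Then for each $k=1,\dots,m$, $\phi_k$ is a well-defined bijection from $\mathscr{B}_{k-1}$ onto $\mathscr{B}_k$. Consequently, the map sending a region $\Delta\in\mathcal{R}(\mathcal{A})$ to the unique $\mathcal{B}\in\mathrm{NBC}(\mathcal{A})$ with $\phi_m\circ\cdots\circ\phi_1(\emptyset,\Delta)=(\mathcal{B},\cap\mathcal{B})$ is a bijection from $\mathcal{R}(\mathcal{A})$ onto $\mathrm{NBC}(\mathcal{A})$.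
   Context: For a (multi)set $\mathcal{B}$ of hyperplanes, $\cap\mathcal{B}=\bigcap_{H\in\mathcal{B}}H$ (with $\cap\emptyset=\mathbb{R}^n$). A circuit of $\mathcal{A}$ is a minimal sub(multi)set $\mathcal{B}\subseteq\mathcal{A}$ with $\cap\mathcal{B}\ne\emptyset$ and $\dim(\cap\mathcal{B})+|\mathcal{B}|=n+1$; a broken circuit is a circuit with its $\prec$-maximal element removed; $\mathcal{B}\subseteq\mathcal{A}$ is an NBC subset if it contains no broken circuit (and $\cap\mathcal{B}\neq\emptyset$); $\mathrm{NBC}(\mathcal{A})$ is the set of NBC subsets. For a finite multiset $\mathcal{H}$ of hyperplanes in an affine subspace $W$, its regions are the connected components of $W-\bigcup_{H\in\mathcal{H}}H$ (if $\mathcal{H}=\emptyset$, the single region is $W$); $\mathcal{R}(\cdot)$ denotes the set of regions. $H_e^+:\boldsymbol\alpha_e\cdot\mathbf{x}>0$, $H_e^-:\boldsymbol\alpha_e\cdot\mathbf{x}<0$. Let $\mathcal{A}_k=\{H_{e_i}:i\le k\}$, $\mathcal{A}_k^c=\mathcal{A}-\mathcal{A}_k$, and for $\mathcal{B}\subseteq\mathcal{A}$, $\mathcal{A}_k^c/\mathcal{B}$ is the multi-arrangement in $\cap\mathcal{B}$ consisting of $(\cap\mathcal{B})\cap H$ for $H\in\mathcal{A}_k^c$ with $(\cap\mathcal{B})\cap H\ne\cap\mathcal{B}$ and $\ne\emptyset$. $\mathscr{B}_k=\{(\mathcal{B}_k,\Delta_k):\mathcal{B}_k\subseteq\mathcal{A}_k,\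 \mathcal{B}_k\in\mathrm{NBC}(\mathcal{A}),\ \Delta_k\in\mathcal{R}(\mathcal{A}_k^c/\mathcal{B}_k)\}$. For $(\mathcal{B}_{k-1},\Delta_{k-1})\in\mathscr{B}_{k-1}$ let $\Delta_k'$ be the unique region of $\mathcal{A}_k^c/\mathcal{B}_{k-1}$ containing $\Delta_{k-1}$, and set $\phi_k(\mathcal{B}_{k-1},\Delta_{k-1})=(\mathcal{B}_{k-1}\cup\{H_{e_k}\},\Delta_k'\cap H_{e_k})$ if $\Delta_{k-1}\subseteq H_{e_k}^+$ and $\Delta_{k-1}\ne\Delta_k'$; $=(\mathcal{B}_{k-1},\Delta_{k-1})$ if $\Delta_{k-1}\subseteq H_{e_k}^+$ and $\Delta_{k-1}=\Delta_k'$; $=(\mathcal{B}_{k-1},\Delta_k')$ if $\Delta_{k-1}\subseteq H_{e_k}^-$. *)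

(* Defs.v *)
From HB Require Import structures.
From mathcomp Require Import all_boot all_order all_algebra.
From mathcomp Require Import all_classical all_reals all_analysis.
Set Implicit Arguments. Unset Strict Implicit. Unset Printing Implicit Defensive.
Import Order.TTheory GRing.Theory Num.Theory.
Import numFieldTopology.Exports numFieldNormedType.Exports.
Local Open Scope classical_set_scope.
Local Open Scope ring_scope.

(* A linear multi-arrangement A = {H_{e_1}, ..., H_{e_m}} in R^n is given by
   normal vectors alpha : 'I_m -> 'rV[R]_n; the hyperplane H_{e_{i+1}} is
   indexed by the ordinal i : 'I_m, and the total order H_{e_1} < ... < H_{e_m}
   is the order of the indices.  Sub(multi)sets of A are {set 'I_m}. *)

Section Arrangement.
Variables (R : realType) (n m : nat) (alpha : 'I_m -> 'rV[R]_n).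

Definition dotv (a x : 'rV[R]_n) : R := \sum_(j < n) a 0 j * x 0 j.

Definition hyp (i : 'I_m) : set 'rV[R]_n := fun x => dotv (alpha i) x = 0.
Definition hplus (i : 'I_m) : set 'rV[R]_n := fun x => 0 < dotv (alpha i) x.
Definition hminus (i : 'I_m) : set 'rV[R]_n := fun x => dotv (alpha i) x < 0.

Definition capB (B : {set 'I_m}) : set 'rV[R]_n :=
  fun x => forall i, i \in B -> dotv (alpha i) x = 0.

(* dim (cap B): dimension of the linear subspace cap B, computed as the rank
   of the kernel matrix whose row space is exactly
   {x : x *m M = 0} = cap B, where column i of M is alpha_i if i \in B
   and 0 otherwise. *)
Definition capB_mx (B : {set 'I_m}) : 'M[R]_(n, m) :=
  \matrix_(j < n, i < m) (if i \in B then alpha i 0 j else 0).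
Definition dim_capB (B : {set 'I_m}) : nat := \rank (kermx (capB_mx B)).

Definition nonempty (S : set 'rV[R]_n) : Prop := exists x, S x.

Definition circ_prop (B : {set 'I_m}) : Prop :=
  nonempty (capB B) /\ (dim_capB B + #|B| = n.+1)%N.

Definition circuit (C : {set 'I_m}) : Prop :=
  circ_prop C /\ forall D : {set 'I_m}, D \proper C -> ~ circ_prop D.

Definition broken_circuit (D : {set 'I_m}) : Prop :=
  exists C, circuit C /\
    exists2 c, c \in C & (forall i, i \in C -> (i <= c)%N) /\ D = C :\ c.

Definition NBC (B : {set 'I_m}) : Prop :=
  (forall D, broken_circuit D -> ~ (D \subset B)) /\ nonempty (capB B).

Definition region (W U : set 'rV[R]_n) (C : set 'rV[R]_n) : Prop :=
  exists x, (W `\` U) x /\ C = connected_component (W `\` U) x.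

Definition region_A (C : set 'rV[R]_n) : Prop :=
  region setT (fun x => exists i, hyp i x) C.

(* A_k = {H_{e_i} : i <= k}, i.e. indices i with (val i < k);
   A_k^c / B = {(cap B) \cap H : H in A_k^c, (cap B) \cap H <> cap B, <> empty};
   union of its hyperplanes (inside cap B): *)
Definition restr_union (k : nat) (B : {set 'I_m}) : set 'rV[R]_n :=
  fun x => capB B x /\ exists i : 'I_m,
      [/\ (k <= i)%N, (capB B `&` hyp i) <> capB B,
          (capB B `&` hyp i) <> set0 & hyp i x].

Definition region_restr (k : nat) (B : {set 'I_m}) (C : set 'rV[R]_n) : Prop :=
  region (capB B) (restr_union k B) C.

Definition state := ({set 'I_m} * set 'rV[R]_n)%type.

Definition Bset (k : nat) (p : state) : Prop :=
  [/\ p.1 \subset [set i : 'I_m | (i < k)%N], NBC p.1 & region_restr k p.1 p.2].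

(* phi_k, for k = j+1 and e_k = j, as a relation  phi_k(p) = q. *)
Definition phi_rel (j : 'I_m) (p q : state) : Prop :=
  exists D', [/\ region_restr j.+1 p.1 D', p.2 `<=` D' &
    [\/ [/\ p.2 `<=` hplus j, p.2 <> D' & q = (j |: p.1, D' `&` hyp j)],
        [/\ p.2 `<=` hplus j, p.2 = D' & q = p]
      | p.2 `<=` hminus j /\ q = (p.1, D')]].

(* chain k p q  <->  phi_k o ... o phi_1 (p) = q *)
Fixpoint chain (k : nat) (p q : state) : Prop :=
  match k with
  | 0 => q = p
  | k'.+1 => exists r, chain k' p r /\
      (if insub k' is Some j then phi_rel j r q else False)
  end.

End Arrangement.

(* Main.v *)
Require Import Defs.
From HB Require Import structures.
From mathcomp Require Import all_boot all_order all_algebra.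
From mathcomp Require Import all_classical all_reals all_analysis.
From mathcomp Require Import ring lra zify.
Import Order.TTheory GRing.Theory Num.Theory.
Import numFieldTopology.Exports numFieldNormedType.Exports.
Local Open Scope classical_set_scope.
Local Open Scope ring_scope.
Set Implicit Arguments. Unset Strict Implicit. Unset Printing Implicit Defensive.
Section Topo.
Variables (R : realType) (n m : nat) (alpha : 'I_m -> 'rV[R]_n).
Local Notation V := 'rV[R]_n.
Local Notation dot i x := (dotv (alpha i) x).

Lemma entry_cont (i : 'I_1) (j : 'I_n) : continuous (fun M : V => M i j).
Proof.
move=> u A /nbhs_ballP[e /= e0 eA].
apply/nbhs_ballP; exists e => //= v [_ uv]; apply: eA; exact: uv.
Qed.

Lemma dot_cont (a : V) : continuous (dotv a).
Proof.
have H : forall s : seq 'I_n, continuous (fun y : V => \sum_(j <- s) a 0 j * y 0 j).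
  elim => [|j s IH].
    rewrite (_ : (fun y : V => _) = cst 0); first exact: cst_continuous.
    by apply: funext => z; rewrite big_nil.
  rewrite (_ : (fun y : V => _) = (fun y : V => a 0 j * y 0 j) + (fun y : V => \sum_(j <- s) a 0 j * y 0 j)); last first.
    by apply: funext => z; rewrite big_cons.
  move=> x; apply: continuousD; last exact: IH.
  apply: continuousM; first exact: cst_continuous.
  exact: entry_cont.
exact: H.
Qed.

Lemma dotvDZ (a x y : V) (s t : R) :
  dotv a (s *: x + t *: y) = s * dotv a x + t * dotv a y.
Proof.
rewrite /dotv !mulr_sumr -big_split; apply: eq_bigr => j _; rewrite !mxE.
simpl; ring.
Qed.

Lemma convpos (a b t : R) : 0 < a -> 0 < b -> 0 <= t <= 1 -> 0 < (1 - t) * a + t * b.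
Proof. move=> ha hb /andP[t0 t1]; nra. Qed.

Section Reg.
Variables (W : set V) (P : 'I_m -> Prop) (U : set V).
Hypothesis Wlin : forall x y (s t : R), W x -> W y -> W (s *: x + t *: y).
Hypothesis HU : forall x, U x <-> W x /\ exists i, P i /\ dot i x = 0.

Definition sgs (x : V) : set V :=
  [set y | W y /\ forall i, P i -> 0 < dot i y * dot i x].

Lemma comp_char x : (W `\` U) x -> connected_component (W `\` U) x = sgs x.
Proof.
move=> [Wx nUx].
have nz : forall i, P i -> dot i x != 0.
  move=> i Pi; apply/eqP => h; apply: nUx; apply/HU; split => //; by exists i.
apply/seteqP; split => y.
- move=> Cy; have [Wy nUy] := connected_component_sub Cy.
  split => // i Pi.
  have nzy : dot i y != 0.
    apply/eqP => h; apply: nUy; apply/HU; split => //; by exists i.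
  rewrite ltNge; apply/negP => le0.
  have cc := connected_continuous_connected (@component_connected _ (W `\` U) x)
    (continuous_subspaceT (@dot_cont (alpha i))).
  have /connected_intervalP iv := cc.
  have ex : (dotv (alpha i) @` connected_component (W `\` U) x) 0.
    have Cx : connected_component (W `\` U) x x by apply: connected_component_refl.
    have [hx|hx] := ltrP 0 (dot i x).
    + have hy : dot i y < 0.
        rewrite lt_neqAle nzy /=; move: le0; rewrite pmulr_lle0 //.
      have E1 : (dotv (alpha i) @` connected_component (W `\` U) x) (dot i y) by exists y.
      have E2 : (dotv (alpha i) @` connected_component (W `\` U) x) (dot i x) by exists x.
      apply: (iv _ _ E1 E2).
      by rewrite (ltW hy) ltW.
    + have hx' : dot i x < 0 by rewrite lt_neqAle hx nz.
      have hy : 0 < dot i y.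
        rewrite lt_neqAle eq_sym nzy /=; move: le0; rewrite nmulr_lle0 //.
      have E1 : (dotv (alpha i) @` connected_component (W `\` U) x) (dot i y) by exists y.
      have E2 : (dotv (alpha i) @` connected_component (W `\` U) x) (dot i x) by exists x.
      apply: (iv _ _ E2 E1).
      by rewrite (ltW hy) ltW.
  case: ex => z Cz z0; have [Wz nUz] := connected_component_sub Cz.
  by apply: nUz; apply/HU; split => //; exists i.
- move=> [Wy sy].
  pose g := fun t : R => x + t *: (y - x).
  have gc : continuous g.
    move=> t; rewrite /g.
    apply: (@continuousD _ _ _ (cst x) (fun t : R => t *: (y - x))).
      exact: cst_continuous.
    apply: continuousZr_tmp; exact: cvg_id.
  have cI := connected_continuous_connected (@segment_connected R 0 1)
     (continuous_subspaceT gc).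
  have g0 : g 0 = x by rewrite /g scale0r addr0.
  have g1 : g 1 = y by rewrite /g scale1r addrC subrK.
  have gE : forall t, g t = (1 - t) *: x + t *: y.
    by move=> t; rewrite /g scalerBr scalerBl scale1r [t *: y - _]addrC addrA.
  apply: (@connected_component_max _ (W `\` U) (g @` `[0, 1]) x).
  + exists 0; last exact: g0. by rewrite /= in_itv /= lexx ler01.
  + move=> _ [t tI <-]; rewrite gE; split; first exact: Wlin.
    move=> /HU [_ [i [Pi]]]; rewrite dotvDZ => h0.
    move: tI => /= tI; move: tI; rewrite in_itv /= => tI.
    have sq : 0 < dot i x * dot i x.
      by rewrite lt_def mulf_neq0 ?nz //= -expr2 sqr_ge0.
    have := convpos sq (sy i Pi) tI.
    by rewrite !mulrA -mulrDl h0 mul0r ltxx.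
  + exact: cI.
  + exists 1; last exact: g1. by rewrite /= in_itv /= lexx ler01.
Qed.

Lemma region_charE C : region W U C <->
  exists x, [/\ W x, (forall i, P i -> dot i x != 0) & C = sgs x].
Proof.
split.
- move=> [x [WUx ->]]; have [Wx nUx] := WUx; exists x; split => //.
  + move=> i Pi; apply/eqP => h; apply: nUx; apply/HU; split => //.
    by exists i.
  + exact: comp_char.
- move=> [x [Wx nz ->]].
  have WUx : (W `\` U) x.
    split => // /HU [_ [i [Pi hi]]]; move: (nz i Pi); by rewrite hi eqxx.
  by exists x; split => //; rewrite comp_char.
Qed.
End Reg.
End Topo.

Section Lin.
Variables (R : realType) (n m : nat) (alpha : 'I_m -> 'rV[R]_n).
Local Notation V := 'rV[R]_n.
Local Notation dot i x := (dotv (alpha i) x).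
Local Notation M S := (capB_mx alpha S).
Local Notation r S := (\rank (capB_mx alpha S)).

Lemma dotv0 (a : V) : dotv a 0 = 0.
Proof. by rewrite /dotv big1 // => j _; rewrite mxE mulr0. Qed.

Lemma capB0 (S : {set 'I_m}) : capB alpha S 0.
Proof. by move=> i _; rewrite dotv0. Qed.

Lemma CAPMX (S : {set 'I_m}) x : capB alpha S x <-> x *m M S = 0.
Proof.
split.
- move=> h; apply/rowP => i; rewrite !mxE.
  case: (boolP (i \in S)) => iS.
    under eq_bigr do rewrite mxE iS.
    rewrite -[RHS](h i iS) /dotv; apply: eq_bigr => j _; exact: mulrC.
  by rewrite big1 // => j _; rewrite mxE (negbTE iS) mulr0.
- move=> h i iS; have h0 := congr1 (fun N : 'rV[R]_m => N 0 i) h; move: h0.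
  rewrite !mxE => h0; rewrite /dotv -[RHS]h0; apply: eq_bigr => j _.
  rewrite mxE iS; exact: mulrC.
Qed.

Lemma rleqn (S : {set 'I_m}) : (r S <= n)%N.
Proof. exact: rank_leq_row. Qed.

Lemma circ_propE (S : {set 'I_m}) : circ_prop alpha S <-> #|S| = (r S).+1.
Proof.
rewrite /circ_prop /dim_capB mxrank_ker; have := rleqn S.
split; first by move=> [_]; lia.
by move=> h; split; [exists 0; exact: capB0|lia].
Qed.

Lemma KERSUB (S T : {set 'I_m}) : (forall x, capB alpha S x -> capB alpha T x) ->
  (kermx (M S) <= kermx (M T))%MS.
Proof.
move=> H; apply/sub_kermxP; apply/row_matrixP => i; rewrite row_mul row0.
apply/CAPMX; apply: H; apply/CAPMX; by rewrite -row_mul mulmx_ker row0.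
Qed.

Lemma KER (S T : {set 'I_m}) : (forall x, capB alpha S x -> capB alpha T x) -> (r T <= r S)%N.
Proof.
move=> /KERSUB/mxrankS; rewrite !mxrank_ker; have := rleqn S; have := rleqn T.
lia.
Qed.

Lemma capB_sub (S T : {set 'I_m}) : S \subset T -> forall x, capB alpha T x -> capB alpha S x.
Proof. by move=> /fintype.subsetP ST x h i iS; apply: h; apply: ST. Qed.

Lemma rmono (S T : {set 'I_m}) : S \subset T -> (r S <= r T)%N.
Proof. by move=> ST; apply: KER; apply: capB_sub. Qed.

Lemma RM (T : {set 'I_m}) x : x \in T -> (r T <= (r (T :\ x)).+1)%N.
Proof.
move=> xT.
have -> : M T = M (T :\ x) + (alpha x)^T *m (delta_mx 0 x : 'M[R]_(1, m)).
  apply/matrixP => a b; rewrite !mxE big_ord1 !mxE in_setD1.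
  have e0 : (ord0 == 0 :> 'I_1) = true by apply/eqP; apply: val_inj.
  rewrite e0 /=.
  case: (eqVneq b x) => [->|bx] /=; first by rewrite xT mulr1 add0r.
  by rewrite mulr0 addr0.
apply: leq_trans (mxrank_add _ _) _; rewrite -[(r (T :\ x)).+1]addn1 leq_add2l.
apply: leq_trans (mxrankM_maxl _ _) _; exact: rank_leq_col.
Qed.

Lemma NM k : forall T : {set 'I_m}, #|T| = k -> forall D : {set 'I_m}, D \subset T ->
  (#|D| + r T <= #|T| + r D)%N.
Proof.
elim: k => [|k IH] T hT D DT.
  move: hT => /eqP; rewrite cards_eq0 => /eqP TE; subst T.
  have -> : D = finset.set0 by apply/eqP; rewrite -finset.subset0.
  by [].
case: (eqVneq D T) => [->|DT']; first by [].
have [x /finset.setDP [xT xD]] : exists x, x \in T :\: D.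
  apply/finset.set0Pn; rewrite finset.setD_eq0; apply: contra DT' => TD.
  by rewrite finset.eqEsubset DT TD.
have hT' : #|T :\ x| = k by move: hT; rewrite (cardsD1 x T) xT add1n => -[].
have DT2 : D \subset T :\ x.
  by apply/fintype.subsetP => y yD; rewrite in_setD1 (fintype.subsetP DT y yD) andbT; apply: contraNneq xD => <-.
have := IH _ hT' D DT2; have := RM xT; rewrite (cardsD1 x T) xT.
lia.
Qed.

Lemma NM' (D T : {set 'I_m}) : D \subset T -> (#|D| + r T <= #|T| + r D)%N.
Proof. exact: (NM erefl). Qed.

Lemma r0 : r finset.set0 = 0%N.
Proof.
apply/eqP; rewrite mxrank_eq0; apply/eqP/matrixP => a b; rewrite !mxE.
by rewrite finset.in_set0.
Qed.

Lemma rleq_card (S : {set 'I_m}) : (r S <= #|S|)%N.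
Proof. have := NM' (finset.sub0set S); rewrite cards0 r0; lia. Qed.

Lemma EXC k : forall S : {set 'I_m}, #|S| = k -> (r S < #|S|)%N ->
  exists C : {set 'I_m}, C \subset S /\ circuit alpha C.
Proof.
elim: k {-2}k (leqnn k) => [|k IH] k' hk S hS hr.
  have : #|S| = 0%N by lia. move=> h0; move: hr; rewrite h0 //.
case: (pselect (exists x, x \in S /\ (r (S :\ x) < #|S :\ x|)%N)).
  move=> [x [xS hx]].
  have hc : #|S :\ x| = #|S|.-1 by rewrite (cardsD1 x S) xS.
  have [C [CS cC]] := IH #|S :\ x| ltac:(lia) _ erefl hx.
  exists C; split => //; apply: fintype.subset_trans CS _; exact: subD1set.
move=> nex.
have [x xS] : exists x, x \in S.
  by apply/finset.set0Pn; rewrite -card_gt0; lia.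
have hx : (#|S :\ x| <= r (S :\ x))%N.
  by rewrite leqNgt; apply/negP => h; apply: nex; exists x.
have := rmono (subD1set S x); have := cardsD1 x S; rewrite xS => hc hm.
exists S; split => //; split.
  apply/circ_propE; lia.
move=> D /fintype.properP [DS [y yS yD]] /circ_propE hD.
have DS2 : D \subset S :\ y.
  by apply/fintype.subsetP => z zD; rewrite in_setD1 (fintype.subsetP DS z zD) andbT; apply: contraNneq yD => <-.
have hy : (#|S :\ y| <= r (S :\ y))%N.
  by rewrite leqNgt; apply/negP => h; apply: nex; exists y.
have := NM' DS2; lia.
Qed.

Lemma circ_max (C : {set 'I_m}) : circuit alpha C -> exists2 c, c \in C & forall i, i \in C -> (i <= c)%N.
Proof.
move=> [/circ_propE hC _].
have [x xC] : exists x, x \in C by apply/finset.set0Pn; rewrite -card_gt0 hC.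
case: (@arg_maxnP _ x (fun i => i \in C) (fun i => val i) xC) => c cC hc.
by exists c.
Qed.

Lemma circ_hyp (C : {set 'I_m}) c : circuit alpha C -> c \in C ->
  forall x, capB alpha (C :\ c) x -> dot c x = 0.
Proof.
move=> [/circ_propE hC hmin] cC x hx.
have hD := hmin _ (properD1 cC).
have cD := cardsD1 c C; rewrite cC in cD.
have m1 := rmono (subD1set C c).
have m2 := NM' (subD1set C c).
have eqr : r (C :\ c) = r C.
  have : #|C :\ c| <> (r (C :\ c)).+1 by move=> h; apply: hD; apply/circ_propE.
  lia.
have sub := KERSUB (capB_sub (subD1set C c)).
have := (mxrank_leqif_eq sub).2; rewrite !mxrank_ker eqr eqxx => /esym/andP[_ s2].
have : (x <= kermx (M (C :\ c)))%MS by apply/sub_kermxP; apply/CAPMX.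
move=> /submx_trans /(_ s2) /sub_kermxP /CAPMX; apply; exact: cC.
Qed.

End Lin.

Section NBCs.
Variables (R : realType) (n m : nat) (alpha : 'I_m -> 'rV[R]_n).
Local Notation V := 'rV[R]_n.
Local Notation dot i x := (dotv (alpha i) x).
Local Notation M S := (capB_mx alpha S).
Local Notation r S := (\rank (capB_mx alpha S)).

Lemma NBC_sub (B B' : {set 'I_m}) : NBC alpha B -> B' \subset B -> NBC alpha B'.
Proof.
move=> [nb _] BB; split; last by exists 0; exact: capB0.
move=> D bD DB; apply: nb bD (fintype.subset_trans DB BB).
Qed.

Lemma capBU1 j (B : {set 'I_m}) y :
  capB alpha (j |: B) y <-> capB alpha B y /\ dot j y = 0.
Proof.
split.
- move=> h; split; last by apply: h; rewrite setU11.
  by move=> i iB; apply: h; rewrite setU1r.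
- move=> [h hj] i; rewrite in_setU1 => /orP[/eqP ->//|]; exact: h.
Qed.

Lemma F1 (B : {set 'I_m}) (c : 'I_m) : NBC alpha B ->
  (forall b, b \in B -> (b < c)%N) -> exists w, capB alpha B w /\ dot c w != 0.
Proof.
move=> hN hB; apply: contrapT => nex.
have hw : forall w, capB alpha B w -> dot c w = 0.
  move=> w hw; apply: contrapT => ne; apply: nex; exists w; split => //.
  exact/eqP.
have cB : c \notin B by apply/negP => /hB; rewrite ltnn.
have h1 : (r (c |: B) <= r B)%N.
  by apply: KER => w hw'; apply/capBU1; split => //; exact: hw.
have h2 := rleq_card alpha B.
have h3 : #|c |: B| = #|B|.+1 by rewrite cardsU1 cB.
have [C [CS cC]] := EXC erefl (ltac:(lia) : (r (c |: B) < #|c |: B|)%N).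
have [M MC hM] := circ_max cC.
have bc : broken_circuit alpha (C :\ M).
  by exists C; split => //; exists M.
case: hN => hN1 _; apply: (hN1 _ bc); apply/fintype.subsetP => y; rewrite in_setD1 => /andP[yM yC].
have := fintype.subsetP CS y yC; rewrite in_setU1 => /orP[/eqP yc|//].
subst y; have := hM _ yC.
have := fintype.subsetP CS M MC; rewrite in_setU1 => /orP[/eqP Mc|/hB].
  by rewrite Mc eqxx in yM.
lia.
Qed.

Lemma F2 (B : {set 'I_m}) (j : 'I_m) z : NBC alpha B -> capB alpha B z ->
  dot j z = 0 -> (forall i : 'I_m, (j < i)%N -> dot i z != 0) ->
  NBC alpha (j |: B).
Proof.
move=> hN hz hj hi; split; last by exists 0; exact: capB0.
move=> D [C [cC [c cC' [hmax ->]]]] sub.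
case: (boolP (j \in C :\ c)) => jD.
- have := jD; rewrite in_setD1 => /andP[jc jC].
  have jlt : (j < c)%N.
    have := hmax _ jC; rewrite leq_eqVlt => /orP[/eqP h|//].
    by move: jc; rewrite (val_inj h) eqxx.
  have hc : capB alpha (C :\ c) z.
    by apply: (capB_sub sub); apply/capBU1; split.
  by have := hi _ jlt; rewrite (circ_hyp cC cC' hc) eqxx.
- case: hN => hN1 _.
  have bc : broken_circuit alpha (C :\ c) by exists C; split => //; exists c.
  apply: (hN1 _ bc); apply/fintype.subsetP => y yD.
  have := fintype.subsetP sub y yD; rewrite in_setU1 => /orP[/eqP yj|//].
  by subst y; rewrite yD in jD.
Qed.

Lemma NBC0 : (forall i, alpha i != 0) -> NBC alpha finset.set0.
Proof.
move=> anz; split; last by exists 0; exact: capB0.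
move=> D [C [cC [c cC' [_ ->]]]] sub.
have e : C :\ c = finset.set0 by apply/eqP; rewrite -finset.subset0.
have := cC => -[/circ_propE hC _].
have := cardsD1 c C; rewrite cC' e cards0 hC => -[] /eqP.
rewrite mxrank_eq0 => /eqP h0.
suff : alpha c = 0 by move=> h; move: (anz c); rewrite h eqxx.
apply/rowP => j.
have := congr1 (fun N : 'M[R]_(n, m) => N j c) h0; rewrite !mxE cC' => ->.
by [] || rewrite !mxE.
Qed.

End NBCs.

Section Sig.
Variables (R : realType) (n m : nat) (alpha : 'I_m -> 'rV[R]_n).
Local Notation V := 'rV[R]_n.
Local Notation dot i x := (dotv (alpha i) x).

Definition sigset (k : nat) (B : {set 'I_m}) (x : V) : set V :=
  [set y | capB alpha B y /\ forall i : 'I_m, (k <= i)%N -> 0 < dot i y * dot i x].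
Definition good (k : nat) (B : {set 'I_m}) (x : V) : Prop :=
  capB alpha B x /\ forall i : 'I_m, (k <= i)%N -> dot i x != 0.

Lemma sqpos (a : R) : a != 0 -> 0 < a * a.
Proof. by move=> a0; rewrite lt_def mulf_neq0 //= -expr2 sqr_ge0. Qed.

Lemma prod_pos_iff (a b c : R) : 0 < a * b -> (0 < c * a) = (0 < c * b).
Proof.
move=> ab; have [a0|a0|a0] := ltgtP a 0.
- have b0 : b < 0 by move: ab; rewrite nmulr_rgt0.
  by rewrite !nmulr_lgt0.
- have b0 : 0 < b by move: ab; rewrite pmulr_rgt0.
  by rewrite !pmulr_lgt0.
- by move: ab; rewrite a0 mul0r ltxx.
Qed.

Lemma capB_comb B y z (s t : R) : capB alpha B y -> capB alpha B z ->
  capB alpha B (s *: y + t *: z).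
Proof. by move=> hy hz i iB; rewrite dotvDZ hy // hz // !mulr0 addr0. Qed.

Lemma sig_self k B x : good k B x -> sigset k B x x.
Proof. by move=> [cx nz]; split => // i ki; apply: sqpos; apply: nz. Qed.

Lemma sig_good k B x y : sigset k B x y -> good k B y.
Proof.
move=> [cy hy]; split => // i ki; apply/eqP => h; have := hy i ki.
by rewrite h mul0r ltxx.
Qed.

Lemma sig_eq k B x y : sigset k B x y -> sigset k B y = sigset k B x.
Proof.
move=> [cy hy]; apply/seteqP; split => z [cz hz]; split => // i ki.
- by rewrite -(prod_pos_iff _ (hy i ki)); apply: hz.
- by rewrite (prod_pos_iff _ (hy i ki)); apply: hz.
Qed.

Lemma sig_split (j : 'I_m) B x y :
  sigset j B x y <-> sigset j.+1 B x y /\ 0 < dot j y * dot j x.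
Proof.
split.
- move=> [cy hy]; split; last exact: hy.
  by split => // i ji; apply: hy; apply: ltnW.
- move=> [[cy hy] hj]; split => // i; rewrite leq_eqVlt => /orP[/eqP e|].
    by rewrite (val_inj e) in hj.
  exact: hy.
Qed.

Lemma sig_comb k B x y z (s t : R) : 0 < s -> 0 < t ->
  sigset k B x y -> sigset k B x z -> sigset k B x (s *: y + t *: z).
Proof.
move=> s0 t0 [cy hy] [cz hz]; split; first exact: capB_comb.
move=> i ki; rewrite dotvDZ mulrDl -!mulrA.
by apply: addr_gt0; apply: mulr_gt0 => //; [apply: hy|apply: hz].
Qed.

Lemma FINMIN (c : 'I_m -> R) : (forall i, 0 < c i) ->
  exists e, 0 < e /\ forall i, e <= c i.
Proof.
move=> cp.
suff [e [e0 he]] : exists e, 0 < e /\ forall i, i \in enum 'I_m -> e <= c i.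
  by exists e; split => // i; apply: he; rewrite mem_enum.
elim: (enum 'I_m) => [|a s [e [e0 he]]]; first by exists 1; split.
exists (Order.min e (c a)); split; first by rewrite lt_min e0 cp.
move=> i; rewrite in_cons => /orP[/eqP ->|iS].
  by rewrite ge_min lexx orbT.
by rewrite ge_min he.
Qed.

Lemma PERT k B z w : good k B z -> capB alpha B w ->
  exists e, 0 < e /\ sigset k B z (z + e *: w).
Proof.
move=> [cz nz] cw.
pose c (i : 'I_m) := if (k <= i)%N then dot i z * dot i z /
   (dot i z * dot i z + dot i w * dot i w + 1) else 1.
have cpos : forall i, 0 < c i.
  move=> i; rewrite /c; case: ifP => ki //.
  apply: divr_gt0; first exact: sqpos (nz i ki).
  have := sqpos (nz i ki); have := sqr_ge0 (dot i w); rewrite expr2; lra.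
have [e [e0 he]] := FINMIN cpos.
exists e; split => //.
have -> : z + e *: w = 1 *: z + e *: w by rewrite scale1r.
split; first exact: capB_comb.
move=> i ki; rewrite dotvDZ mul1r.
have := he i; rewrite /c ki.
set a := dot i z; set b := dot i w.
have a2 := sqpos (nz i ki); rewrite -/a in a2.
have den : 0 < a * a + b * b + 1.
  have := sqr_ge0 b; rewrite expr2; lra.
rewrite ler_pdivlMr // => h.
have := mulr_ge0 (ltW e0) (sqr_ge0 (b + a)); rewrite expr2 => h2.
nra.
Qed.

End Sig.

Section Phi.
Variables (R : realType) (n m : nat) (alpha : 'I_m -> 'rV[R]_n).
Local Notation V := 'rV[R]_n.
Local Notation dot i x := (dotv (alpha i) x).
Local Notation Sg := (sigset alpha).
Local Notation Gd := (good alpha).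

Lemma dotvZ (a x : V) (s : R) : dotv a (s *: x) = s * dotv a x.
Proof.
have := dotvDZ a x x s 0; rewrite scale0r addr0 => ->; by rewrite mul0r addr0.
Qed.

Lemma dotvDs (a x y : V) (s : R) : dotv a (x + s *: y) = dotv a x + s * dotv a y.
Proof. by have := dotvDZ a x y 1 s; rewrite scale1r mul1r. Qed.

Lemma capB_scale B (s : R) w : capB alpha B w -> capB alpha B (s *: w).
Proof. by move=> cw i iB; rewrite dotvZ cw // mulr0. Qed.

Lemma regE (k : nat) B C : NBC alpha B -> (forall b, b \in B -> (b < k)%N) ->
  region_restr alpha k B C <-> exists x, Gd k B x /\ C = Sg k B x.
Proof.
move=> hN hB.
have Wlin : forall (x y : V) (s t : R), capB alpha B x -> capB alpha B y ->
    capB alpha B (s *: x + t *: y).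
  by move=> x y s t; apply: capB_comb.
have HU : forall x, restr_union alpha k B x <->
    capB alpha B x /\ exists i, (fun i : 'I_m => (k <= i)%N) i /\ dot i x = 0.
  move=> x; split.
    by move=> [cx [i [ki _ _ hi]]]; split => //; exists i.
  move=> [cx [i [ki hi]]]; split => //; exists i; split => //.
  + move=> h.
    have [w [cw nw]] := F1 (c := i) hN (fun b bB => leq_trans (hB b bB) ki).
    have : (capB alpha B `&` hyp alpha i) w by rewrite h.
    by case => _ hw; rewrite /hyp in hw; rewrite hw eqxx in nw.
  + move=> h.
    have : (capB alpha B `&` hyp alpha i) 0.
      by split; [exact: capB0|exact: dotv0].
    by rewrite h.
rewrite /region_restr (region_charE Wlin HU).
split.
- by move=> [x [cx nz ->]]; exists x.
- by move=> [x [[cx nz] ->]]; exists x.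
Qed.

Lemma regD (k : nat) B x : NBC alpha B -> (forall b, b \in B -> (b < k)%N) ->
  Gd k B x -> region_restr alpha k B (Sg k B x).
Proof. by move=> hN hB gx; apply/regE => //; exists x. Qed.

Lemma bndE (B : {set 'I_m}) k :
  B \subset [set i : 'I_m | (i < k)%N] <-> forall b, b \in B -> (b < k)%N.
Proof.
split.
- by move=> /fintype.subsetP h b /h; rewrite inE.
- by move=> h; apply/fintype.subsetP => b /h; rewrite inE.
Qed.

Lemma BsetE k B C : Bset alpha k (B, C) <->
  [/\ (forall b, b \in B -> (b < k)%N), NBC alpha B &
      exists x, Gd k B x /\ C = Sg k B x].
Proof.
split.
- move=> [/bndE hb hN /regE]; rewrite /=; move=> h; split => //; exact: h.
- move=> [hb hN hx]; split => //=; first exact/bndE.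
  exact/regE.
Qed.

Lemma good_S (j : nat) B x : Gd j B x -> Gd j.+1 B x.
Proof. by move=> [cx nz]; split => // i ji; apply: nz; apply: ltnW. Qed.

Section Fix.
Variables (j : 'I_m) (B : {set 'I_m}) (x : V).
Hypotheses (hN : NBC alpha B) (hB : forall b, b \in B -> (b < j)%N) (gx : Gd j B x).

Let hB1 : forall b, b \in B -> (b < j.+1)%N.
Proof. by move=> b /hB /ltnW. Qed.

Lemma dxnz : dot j x != 0.
Proof. by case: gx => _; apply. Qed.

Lemma PHI_D D : region_restr alpha j.+1 B D -> Sg j B x `<=` D -> D = Sg j.+1 B x.
Proof.
move=> /(regE _ hN hB1) [x' [gx' ->]] sub.
have := sub x (sig_self gx) => hx.
by rewrite (sig_eq hx).
Qed.

Lemma phi_cases q : phi_rel alpha j (B, Sg j B x) q ->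
  [\/ [/\ 0 < dot j x, Sg j B x <> Sg j.+1 B x &
          q = (j |: B, Sg j.+1 B x `&` hyp alpha j)],
      [/\ 0 < dot j x, Sg j B x = Sg j.+1 B x & q = (B, Sg j B x)] |
      dot j x < 0 /\ q = (B, Sg j.+1 B x)].
Proof.
move=> [D' [rD sub cs]]; rewrite /= in rD sub cs.
rewrite (PHI_D rD sub) in cs.
have xs := sig_self gx.
case: cs => [[hp ne ->]|[hp e ->]|[hm ->]].
- by apply: Or31; split => //; apply: hp.
- by apply: Or32; split => //; apply: hp.
- by apply: Or33; split => //; apply: hm.
Qed.

Lemma phi_intro q :
  [\/ [/\ 0 < dot j x, Sg j B x <> Sg j.+1 B x &
          q = (j |: B, Sg j.+1 B x `&` hyp alpha j)],
      [/\ 0 < dot j x, Sg j B x = Sg j.+1 B x & q = (B, Sg j B x)] |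
      dot j x < 0 /\ q = (B, Sg j.+1 B x)] ->
  phi_rel alpha j (B, Sg j B x) q.
Proof.
move=> cs; exists (Sg j.+1 B x); split => /=.
- exact: regD hN hB1 (good_S gx).
- by move=> y /sig_split [].
- case: cs => [[hp ne ->]|[hp e ->]|[hm ->]].
  + apply: Or31; split => // y /sig_split [_]; rewrite pmulr_lgt0 //.
  + apply: Or32; split => // y /sig_split [_]; rewrite pmulr_lgt0 //.
  + apply: Or33; split => // y /sig_split [_]; rewrite nmulr_lgt0 //.
Qed.

Lemma phi_det q1 q2 : phi_rel alpha j (B, Sg j B x) q1 ->
  phi_rel alpha j (B, Sg j B x) q2 -> q1 = q2.
Proof.
move=> /phi_cases c1 /phi_cases c2.
case: c1 => [[s1 e1 ->]|[s1 e1 ->]|[s1 ->]];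
case: c2 => [[s2 e2 ->]|[s2 e2 ->]|[s2 ->]] //; exfalso; try lra.
all: try by [apply: e1 e2|apply: e2 e1].
Qed.

Lemma cutpt : 0 < dot j x -> Sg j B x <> Sg j.+1 B x ->
  exists z, Sg j.+1 B x z /\ dot j z = 0.
Proof.
move=> xp ne.
have [y [Dy ny]] : exists y, Sg j.+1 B x y /\ ~ (0 < dot j y * dot j x).
  apply: contrapT => nex; apply: ne; apply/seteqP; split.
    by move=> y /sig_split [].
  move=> y Dy; apply/sig_split; split => //.
  by apply: contrapT => h; apply: nex; exists y.
move: ny; rewrite pmulr_lgt0 // => /negP; rewrite -leNgt => yle.
have [y0|yn] := eqVneq (dot j y) 0; first by exists y.
have yneg : dot j y < 0 by rewrite lt_neqAle yn.
exists ((- dot j y) *: x + dot j x *: y); split.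
  apply: sig_comb => //; first by rewrite oppr_gt0.
  exact: sig_self (good_S gx).
by rewrite dotvDZ mulNr mulrC addNr.
Qed.

Lemma cut_region (z : V) : Sg j.+1 B x z -> dot j z = 0 ->
  NBC alpha (j |: B) /\
  region_restr alpha j.+1 (j |: B) (Sg j.+1 B x `&` hyp alpha j).
Proof.
move=> Dz z0.
have [cz nzz] := sig_good Dz.
have hN' : NBC alpha (j |: B).
  apply: (F2 hN cz z0) => i ji; exact: nzz.
have hB' : forall b, b \in j |: B -> (b < j.+1)%N.
  by move=> b; rewrite in_setU1 => /orP[/eqP ->//|/hB1].
split => //; apply/regE => //.
exists z; split.
  by split => //; apply/capBU1.
rewrite -(sig_eq Dz); apply/seteqP; split.
- by move=> y [[cy hy] hj]; split => //; apply/capBU1.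
- by move=> y [/capBU1 [cy hj] hy]; split.
Qed.

End Fix.
End Phi.

Section Main.
Variables (R : realType) (n m : nat) (alpha : 'I_m -> 'rV[R]_n).
Local Notation V := 'rV[R]_n.
Local Notation dot i x := (dotv (alpha i) x).
Local Notation Sg := (sigset alpha).
Local Notation Gd := (good alpha).

Lemma SIGEQ (j : 'I_m) B x1 x2 : Sg j.+1 B x1 = Sg j.+1 B x2 ->
  0 < dot j x1 * dot j x2 -> Sg j B x1 = Sg j B x2.
Proof.
move=> eD h; apply/seteqP; split => y /sig_split [Dy hy]; apply/sig_split.
- by split; [rewrite -eD|rewrite -(prod_pos_iff _ h)].
- split; first by rewrite eD.
  by rewrite (prod_pos_iff _ h).
Qed.

Lemma phi_exists (j : 'I_m) p : Bset alpha j p -> exists q,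
  [/\ Bset alpha j.+1 q, phi_rel alpha j p q &
      forall q', phi_rel alpha j p q' -> q' = q].
Proof.
case: p => B C /BsetE [hB hN [x [gx ->]]].
have hB1 : forall b, b \in B -> (b < j.+1)%N by move=> b /hB /ltnW.
suff [q [bq pq]] : exists q, Bset alpha j.+1 q /\ phi_rel alpha j (B, Sg j B x) q.
  by exists q; split => // q' pq'; exact: (phi_det hN hB gx pq' pq).
have := dxnz gx; rewrite neq_lt => /orP[xn|xp].
- exists (B, Sg j.+1 B x); split.
  + by apply/BsetE; split => //; exists x; split => //; exact: good_S.
  + by apply: phi_intro => //; apply: Or33; split.
- case: (pselect (Sg j B x = Sg j.+1 B x)) => e.
  + exists (B, Sg j B x); split.
      by apply/BsetE; split => //; exists x; split; [exact: good_S|exact: e].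
    by apply: phi_intro => //; apply: Or32; split.
  + have [z [Dz z0]] := cutpt gx xp e.
    have [hN' rr] := cut_region hN hB Dz z0.
    exists (j |: B, Sg j.+1 B x `&` hyp alpha j); split.
    * split => //=; apply/bndE => b; rewrite in_setU1 => /orP[/eqP ->//|/hB1//].
    * by apply: phi_intro => //; apply: Or31; split.
Qed.

Lemma phi_inj (j : 'I_m) p1 p2 q : Bset alpha j p1 -> Bset alpha j p2 ->
  phi_rel alpha j p1 q -> phi_rel alpha j p2 q -> p1 = p2.
Proof.
case: p1 => B1 C1 /BsetE [hB1 hN1 [x1 [g1 ->]]].
case: p2 => B2 C2 /BsetE [hB2 hN2 [x2 [g2 ->]]].
move=> /(phi_cases hN1 hB1 g1) c1 /(phi_cases hN2 hB2 g2) c2.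
have jB1 : j \notin B1 by apply/negP => /hB1; rewrite ltnn.
have jB2 : j \notin B2 by apply/negP => /hB2; rewrite ltnn.
case: c1 => [[s1 e1 E1]|[s1 e1 E1]|[s1 E1]];
case: c2 => [[s2 e2 E2]|[s2 e2 E2]|[s2 E2]];
have {E1 E2} E := etrans (esym E1) E2.
- case: E => EB ED.
  have eB : B1 = B2 by rewrite -(setU1K jB1) EB setU1K.
  subst B2.
  have [z [Dz z0]] := cutpt g1 s1 e1.
  have Dz2 : Sg j.+1 B1 x2 z.
    have : (Sg j.+1 B1 x1 `&` hyp alpha j) z by split.
    by rewrite ED => -[].
  have eD : Sg j.+1 B1 x1 = Sg j.+1 B1 x2 by rewrite -(sig_eq Dz) -(sig_eq Dz2).
  by congr pair; apply: SIGEQ eD _; apply: mulr_gt0.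
- by move: E => [EB _]; move: jB2; rewrite -EB setU11.
- by move: E => [EB _]; move: jB2; rewrite -EB setU11.
- by move: E => [EB _]; move: jB1; rewrite EB setU11.
- exact: E.
- move: E => [eB eC]; subst B2.
  have : Sg j.+1 B1 x2 x2 by apply: sig_self; apply: good_S.
  rewrite -eC => /sig_split [_]; rewrite pmulr_lgt0 // => h.
  by have := lt_trans h s2; rewrite ltxx.
- by move: E => [EB _]; move: jB1; rewrite EB setU11.
- move: E => [eB eC]; subst B2.
  have : Sg j.+1 B1 x1 x1 by apply: sig_self; apply: good_S.
  rewrite eC => /sig_split [_]; rewrite pmulr_lgt0 // => h.
  by have := lt_trans h s1; rewrite ltxx.
- move: E => [eB eD]; subst B2.
  by congr pair; apply: SIGEQ eD _; rewrite nmulr_rgt0.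
Qed.

Lemma phi_onto (j : 'I_m) q : Bset alpha j.+1 q ->
  exists p, Bset alpha j p /\ phi_rel alpha j p q.
Proof.
case: q => B' E /BsetE [hb' hN' [x [gx ->]]].
case: (boolP (j \in B')) => jB.
- set B := B' :\ j.
  have eB : B' = j |: B by rewrite /B finset.setD1K.
  have hB : forall b, b \in B -> (b < j)%N.
    move=> b; rewrite in_setD1 => /andP[bj bB'].
    have := hb' _ bB'; rewrite ltnS leq_eqVlt => /orP[/eqP e|//].
    by rewrite (val_inj e) eqxx in bj.
  have hN : NBC alpha B by apply: NBC_sub hN' _; rewrite eB; apply: finset.subsetUr.
  have [w [cw nw]] := F1 (c := j) hN hB.
  rewrite eB in gx *.
  have [cx' nzx] := gx.
  have [cx x0] := (capBU1 _ _ _ _).1 cx'.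
  have gxB : Gd j.+1 B x by split.
  have cw' := capB_scale (dot j w) cw.
  have [e [e0 hxx]] := PERT gxB cw'.
  set xx := x + e *: (dot j w *: w) in hxx *.
  have dxx : dot j xx = e * (dot j w * dot j w) by rewrite /xx dotvDs dotvZ x0 add0r.
  have xxp : 0 < dot j xx by rewrite dxx mulr_gt0 // sqpos.
  have gxx : Gd j B xx.
    split; first by case: hxx.
    move=> i; rewrite leq_eqVlt => /orP[/eqP ei|ji].
      by rewrite -(val_inj ei) lt0r_neq0.
    by have [_ nz] := sig_good hxx; exact: nz.
  exists (B, Sg j B xx); split.
  + by apply/BsetE; split => //; exists xx.
  + apply: phi_intro => //; apply: Or31.
    have eD : Sg j.+1 B xx = Sg j.+1 B x := sig_eq hxx.
    split => //.
    * move=> h.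
      have : Sg j.+1 B xx x by rewrite eD; apply: sig_self.
      by rewrite -h => /sig_split [_]; rewrite x0 mul0r ltxx.
    * rewrite eD; congr pair; apply/seteqP; split.
      - by move=> y [cy hy]; move/capBU1: cy => [cy yj]; split.
      - by move=> y [[cy hy] yj]; split => //; apply/capBU1.
- have hb : forall b, b \in B' -> (b < j)%N.
    move=> b bB; have := hb' _ bB; rewrite ltnS leq_eqVlt => /orP[/eqP e|//].
    by move: jB; rewrite -(val_inj e) bB.
  case: (pselect (exists y, Sg j.+1 B' x y /\ dot j y < 0)) => [[y [Ey yn]]|nex].
  + have gy : Gd j B' y.
      split; first by case: Ey.
      move=> i; rewrite leq_eqVlt => /orP[/eqP ei|ji].
        by rewrite -(val_inj ei) ltr0_neq0.
      by have [_ nz] := sig_good Ey; exact: nz.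
    exists (B', Sg j B' y); split; first by apply/BsetE; split => //; exists y.
    by apply: phi_intro => //; apply: Or33; split => //; rewrite (sig_eq Ey).
  + have pos : forall y, Sg j.+1 B' x y -> 0 < dot j y.
      move=> y Ey; rewrite lt_neqAle; apply/andP; split; last first.
        by rewrite leNgt; apply/negP => yn; apply: nex; exists y.
      apply/eqP => y0.
      have [w [cw nw]] := F1 (c := j) hN' hb.
      have cw' := capB_scale (- dot j w) cw.
      have [e [e0 hyy]] := PERT (sig_good Ey) cw'.
      apply: nex; exists (y + e *: (- dot j w *: w)); split.
        by rewrite -(sig_eq Ey).
      rewrite dotvDs dotvZ -y0 add0r mulNr mulrN oppr_lt0.
      by rewrite mulr_gt0 // sqpos.
    have xp := pos x (sig_self gx).
    have gxj : Gd j B' x.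
      split; first by case: gx.
      move=> i; rewrite leq_eqVlt => /orP[/eqP ei|ji].
        by rewrite -(val_inj ei) lt0r_neq0.
      by case: gx => _; apply.
    have eS : Sg j B' x = Sg j.+1 B' x.
      apply/seteqP; split; first by move=> y /sig_split [].
      move=> y Ey; apply/sig_split; split => //; apply: mulr_gt0; [exact: pos|exact: xp].
    exists (B', Sg j B' x); split; first by apply/BsetE; split => //; exists x.
    by apply: phi_intro => //; apply: Or32; split => //; rewrite eS.
Qed.

End Main.

Section Chain.
Variables (R : realType) (n m : nat) (alpha : 'I_m -> 'rV[R]_n).
Local Notation V := 'rV[R]_n.
Local Notation dot i x := (dotv (alpha i) x).
Local Notation Sg := (sigset alpha).
Local Notation Gd := (good alpha).

Lemma chainS k p q (hk : (k < m)%N) : chain alpha k.+1 p q <->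
  exists r, chain alpha k p r /\ phi_rel alpha (Ordinal hk) r q.
Proof.
rewrite /=; case: insubP => [j _ jE|]; last by rewrite hk.
by have -> : j = Ordinal hk by apply: val_inj.
Qed.

Lemma CH1 k : (k <= m)%N -> forall p, Bset alpha 0 p -> exists q,
  [/\ Bset alpha k q, chain alpha k p q & forall q', chain alpha k p q' -> q' = q].
Proof.
elim: k => [|k IH] hk p Bp; first by exists p; split.
have [r [Br cr ur]] := IH (ltnW hk) p Bp.
have [q [Bq pq uq]] := phi_exists (j := Ordinal hk) Br.
exists q; split => //.
  by apply/(chainS _ _ hk); exists r.
move=> q' /(chainS _ _ hk) [r' [cr' pr']].
apply: uq; by rewrite -(ur _ cr').
Qed.

Lemma CH2 k : (k <= m)%N -> forall p1 p2 q, Bset alpha 0 p1 -> Bset alpha 0 p2 ->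
  chain alpha k p1 q -> chain alpha k p2 q -> p1 = p2.
Proof.
elim: k => [|k IH] hk p1 p2 q B1 B2; first by move=> /= -> ->.
move=> /(chainS _ _ hk) [r1 [c1 h1]] /(chainS _ _ hk) [r2 [c2 h2]].
have [s1 [Bs1 cs1 us1]] := CH1 (ltnW hk) B1.
have [s2 [Bs2 cs2 us2]] := CH1 (ltnW hk) B2.
have e1 := us1 _ c1; have e2 := us2 _ c2; subst r1 r2.
have e : s1 = s2 := phi_inj (j := Ordinal hk) Bs1 Bs2 h1 h2.
subst s2; exact: IH (ltnW hk) _ _ _ B1 B2 c1 c2.
Qed.

Lemma CH3 k : (k <= m)%N -> forall q, Bset alpha k q ->
  exists p, Bset alpha 0 p /\ chain alpha k p q.
Proof.
elim: k => [|k IH] hk q Bq; first by exists q.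
have [r [Br pr]] := phi_onto (j := Ordinal hk) Bq.
have [p [Bp cp]] := IH (ltnW hk) r Br.
by exists p; split => //; apply/(chainS _ _ hk); exists r.
Qed.

Lemma Bset_m B C : Bset alpha m (B, C) <-> NBC alpha B /\ C = capB alpha B.
Proof.
split.
- move=> /BsetE [hb hN [x [gx ->]]]; split => //.
  apply/seteqP; split; first by move=> y [].
  by move=> y cy; split => // i; rewrite leqNgt ltn_ord.
- move=> [hN ->]; apply/BsetE; split; [by move=> b _; exact: ltn_ord|exact: hN|].
  exists 0; split; first by split; [exact: capB0|move=> i; rewrite leqNgt ltn_ord].
  apply/seteqP; split; last by move=> y [].
  by move=> y cy; split => // i; rewrite leqNgt ltn_ord.
Qed.

Lemma Bset_0 D : (forall i, alpha i != 0) ->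
  Bset alpha 0 (finset.set0, D) <-> region_A alpha D.
Proof.
move=> anz.
have Wlin : forall (x y : V) (s t : R), setT x -> setT y -> setT (s *: x + t *: y).
  by [].
have HU : forall x, (fun x => exists i, hyp alpha i x) x <->
    setT x /\ exists i, (fun _ : 'I_m => True) i /\ dot i x = 0.
  move=> x; split; first by move=> [i hi]; split => //; exists i.
  by move=> [_ [i [_ hi]]]; exists i.
have c0 : forall y, capB alpha finset.set0 y by move=> y i; rewrite finset.in_set0.
rewrite /region_A (region_charE Wlin HU) BsetE.
split.
- move=> [_ _ [x [[_ nz] ->]]]; exists x; split => //.
    by move=> i _; apply: nz.
  rewrite /sgs; apply/seteqP; split.
    by move=> y [_ hy]; split => // i _; apply: hy.
  by move=> y [_ hy]; split => // i _; apply: hy.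
- move=> [x [_ nz ->]]; split.
  + by move=> b; rewrite finset.in_set0.
  + exact: NBC0.
  + exists x; split; first by split => // i _; apply: nz.
    rewrite /sgs; apply/seteqP; split.
      by move=> y [_ hy]; split => // i _; apply: hy.
    by move=> y [_ hy]; split => // i _; apply: hy.
Qed.

End Chain.

Unset Implicit Arguments.

Theorem mainTheorem6 (R : realType) (n m : nat) (alpha : 'I_m -> 'rV[R]_n)
    (alpha_nz : forall i, alpha i != 0) :
  (forall j : 'I_m,
     (* phi_{j+1} is a well-defined map from B_j into B_{j+1} *)
     (forall p, Bset alpha j p ->
        exists q, [/\ Bset alpha j.+1 q, phi_rel alpha j p q &
                      forall q', phi_rel alpha j p q' -> q' = q]) /\
     (* injective *)
     (forall p1 p2 q, Bset alpha j p1 -> Bset alpha j p2 ->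
        phi_rel alpha j p1 q -> phi_rel alpha j p2 q -> p1 = p2) /\
     (* onto B_{j+1} *)
     (forall q, Bset alpha j.+1 q ->
        exists p, Bset alpha j p /\ phi_rel alpha j p q)) /\
  (* the induced map R(A) -> NBC(A) is well defined ... *)
  (forall D, region_A alpha D ->
     exists B, [/\ NBC alpha B, chain alpha m (finset.set0, D) (B, capB alpha B) &
       forall B', NBC alpha B' -> chain alpha m (finset.set0, D) (B', capB alpha B') ->
                  B' = B]) /\
  (* ... injective ... *)
  (forall D1 D2 B, region_A alpha D1 -> region_A alpha D2 -> NBC alpha B ->
     chain alpha m (finset.set0, D1) (B, capB alpha B) ->
     chain alpha m (finset.set0, D2) (B, capB alpha B) -> D1 = D2) /\
  (* ... and onto NBC(A). *)
  (forall B, NBC alpha B ->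
     exists D, region_A alpha D /\ chain alpha m (finset.set0, D) (B, capB alpha B)).
Proof.
split.
  move=> j; split; first by move=> p; exact: phi_exists.
  split; first by move=> p1 p2 q; exact: phi_inj.
  by move=> q; exact: phi_onto.
split.
  move=> D hD.
  have B0 : Bset alpha 0 (finset.set0, D) by apply/Bset_0.
  have [[B C] [Bq cq uq]] := CH1 (leqnn m) B0.
  move/Bset_m: Bq => [hN eC]; subst C.
  exists B; split => // B' _ c'.
  by have := uq _ c' => -[].
split.
  move=> D1 D2 B h1 h2 _ c1 c2.
  have B1 : Bset alpha 0 (finset.set0, D1) by apply/Bset_0.
  have B2 : Bset alpha 0 (finset.set0, D2) by apply/Bset_0.
  by have := CH2 (leqnn m) B1 B2 c1 c2 => -[].
move=> B hN.
have Bm : Bset alpha m (B, capB alpha B) by apply/Bset_m.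
have [[B0 D] [Bp cp]] := CH3 (leqnn m) Bm.
have Bp' := Bp; case/BsetE: Bp' => hb _ _.
have e : B0 = finset.set0.
  by apply/eqP; rewrite -finset.subset0; apply/fintype.subsetP => b /hb.
subst B0; exists D; split => //; exact/(Bset_0 _ alpha_nz).
Qed.
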